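(* Let $\omega:[0,1]\to[0,1/2]$ satisfy $\omega\in C^0([0,1])\cap C^\infty((0,1))$, $\omega'(t)>0$ for all $t\in(0,1)$, $\omega(0)=0$, $\omega(1)=\tfrac12$. Let $\Delta\subset\mathbb{R}^2$ be the interior of the triangle with vertices $(-1,0)$, $(1,1)$, $(1,0)$, and for $a\in(0,1)$ let $l_a=\{(x_1,x_2)\in\mathbb{R}^2:\ x_2=\omega(a)(x_1+a),\ x_1\in(-a,1)\}$. Then there exists $u\in C^{0,1}(\overline{\Delta})\cap C^2(\Delta)$ such that $$|u(x)-u(y)|\le|x-y|\qquad\text{for all } x,y\in\Delta,$$ with equality if and only if $x,y\in l_a$ for some $a\in(0,1)$. *)

(* Defs.v *)
From Stdlib Require Import Reals.
From Coquelicot Require Import Coquelicot.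
Open Scope R_scope.

Definition edist (x y : R * R) : R :=
  sqrt ((fst x - fst y) ^ 2 + (snd x - snd y) ^ 2).

(* Delta: open triangle with vertices (-1,0), (1,1), (1,0) *)
Definition tri (p : R * R) : Prop :=
  0 < snd p /\ fst p < 1 /\ snd p < (fst p + 1) / 2.

Definition closed_tri (p : R * R) : Prop :=
  0 <= snd p /\ fst p <= 1 /\ snd p <= (fst p + 1) / 2.

Definition on_l (omega : R -> R) (a : R) (p : R * R) : Prop :=
  snd p = omega a * (fst p + a) /\ - a < fst p < 1.

Definition d1 (f : R * R -> R) : R * R -> R :=
  fun p => Derive (fun t => f (t, snd p)) (fst p).
Definition d2 (f : R * R -> R) : R * R -> R :=
  fun p => Derive (fun t => f (fst p, t)) (snd p).

Definition has_partials (f : R * R -> R) (p : R * R) : Prop :=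
  ex_derive (fun t => f (t, snd p)) (fst p) /\
  ex_derive (fun t => f (fst p, t)) (snd p).

Definition C2_on (D : R * R -> Prop) (u : R * R -> R) : Prop :=
  forall p, D p ->
    has_partials u p /\ has_partials (d1 u) p /\ has_partials (d2 u) p /\
    continuous u p /\ continuous (d1 u) p /\ continuous (d2 u) p /\
    continuous (d1 (d1 u)) p /\ continuous (d2 (d1 u)) p /\
    continuous (d1 (d2 u)) p /\ continuous (d2 (d2 u)) p.

Definition lipschitz_on (D : R * R -> Prop) (u : R * R -> R) : Prop :=
  exists L, forall x y, D x -> D y -> Rabs (u x - u y) <= L * edist x y.

(* Main.v *)
Require Import Defs.
From Stdlib Require Import Reals Lra Psatz ClassicalEpsilon.
From Coquelicot Require Import Coquelicot.
Open Scope R_scope.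

Lemma ball_R (x e y : R) : ball x e y <-> Rabs (y - x) < e.
Proof. reflexivity. Qed.

Lemma loc_R (x : R) (P : R -> Prop) :
  (exists d, 0 < d /\ forall y, Rabs (y - x) < d -> P y) -> locally x P.
Proof.
  intros [d [Hd H]]. exists (mkposreal d Hd). intros y Hy. apply H. exact Hy.
Qed.

Lemma loc_R_inv (x : R) (P : R -> Prop) :
  locally x P -> exists d, 0 < d /\ forall y, Rabs (y - x) < d -> P y.
Proof.
  intros [d H]. exists d. split. apply cond_pos. intros y Hy. apply H. exact Hy.
Qed.

Lemma loc_R2 (p : R * R) (P : R * R -> Prop) :
  (exists d, 0 < d /\ forall q, Rabs (fst q - fst p) < d -> Rabs (snd q - snd p) < d -> P q) -> locally p P.
Proof.
  intros [d [Hd H]]. exists (mkposreal d Hd). intros [q1 q2] [H1 H2]. apply H; assumption.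
Qed.

Lemma loc_R2_inv (p : R * R) (P : R * R -> Prop) :
  locally p P -> exists d, 0 < d /\ forall q, Rabs (fst q - fst p) < d -> Rabs (snd q - snd p) < d -> P q.
Proof.
  intros [d H]. exists d. split. apply cond_pos. intros [q1 q2] H1 H2. apply H. split; assumption.
Qed.

Definition cont2 (F : R * R -> R) (p : R * R) :=
  forall eps, 0 < eps -> exists d, 0 < d /\ forall q,
    Rabs (fst q - fst p) < d -> Rabs (snd q - snd p) < d -> Rabs (F q - F p) < eps.

Lemma cont2_continuous F p : cont2 F p -> continuous F p.
Proof.
  intros H. intros P [e HP]. destruct (H e (cond_pos e)) as [d [Hd Hq]].
  apply loc_R2. exists d. split; auto. intros q H1 H2. apply HP. apply Hq; auto.
Qed.

Lemma continuous_cont2 F p : continuous F p -> cont2 F p.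
Proof.
  intros H eps He.
  assert (L : locally (F p) (fun y => Rabs (y - F p) < eps)).
  { apply loc_R. exists eps. split; auto. }
  specialize (H _ L). apply loc_R2_inv in H. exact H.
Qed.

Lemma cont2_line1 F p : cont2 F p -> continuous (fun t => F (t, snd p)) (fst p).
Proof.
  destruct p as [p1 p2]. intros H P [e HP]. destruct (H e (cond_pos e)) as [d [Hd Hq]].
  apply loc_R. exists d. split; auto. intros y Hy. apply HP. apply (Hq (_,_)); simpl in *; auto.
  unfold Rminus; rewrite Rplus_opp_r, Rabs_R0; auto.
Qed.

Lemma cont2_line2 F p : cont2 F p -> continuous (fun t => F (fst p, t)) (snd p).
Proof.
  destruct p as [p1 p2]. intros H P [e HP]. destruct (H e (cond_pos e)) as [d [Hd Hq]].
  apply loc_R. exists d. split; auto. intros y Hy. apply HP. apply (Hq (_,_)); simpl in *; auto.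
  unfold Rminus; rewrite Rplus_opp_r, Rabs_R0; auto.
Qed.

Lemma cont_R (f : R -> R) x :
  (forall eps, 0 < eps -> exists d, 0 < d /\ forall y, Rabs (y - x) < d -> Rabs (f y - f x) < eps) ->
  continuous f x.
Proof.
  intros H P [e HP]. destruct (H e (cond_pos e)) as [d [Hd Hq]].
  apply loc_R. exists d. split; auto. intros y Hy. apply HP. apply Hq; auto.
Qed.

Lemma cont_R_inv (f : R -> R) x : continuous f x ->
  forall eps, 0 < eps -> exists d, 0 < d /\ forall y, Rabs (y - x) < d -> Rabs (f y - f x) < eps.
Proof.
  intros H eps He.
  assert (L : locally (f x) (fun y => Rabs (y - f x) < eps)).
  { apply loc_R. exists eps. split; auto. }
  specialize (H _ L). apply loc_R_inv in H. exact H.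
Qed.

Lemma cont_nonzero (f : R -> R) x : continuous f x -> f x <> 0 -> locally x (fun t => f t <> 0).
Proof.
  intros H Hn. destruct (cont_R_inv f x H (Rabs (f x)) (Rabs_pos_lt _ Hn)) as [d [Hd Hq]].
  apply loc_R. exists d. split; auto. intros y Hy Hf. specialize (Hq y Hy). rewrite Hf in Hq.
  rewrite Rminus_0_l, Rabs_Ropp in Hq. lra.
Qed.

Lemma deriv_slope (f Rf : R -> R) x :
  locally x (fun t => t <> x -> (f t - f x) / (t - x) = Rf t) -> continuous Rf x ->
  is_derive f x (Rf x).
Proof.
  intros Hl Hc. apply is_derive_Reals. intros eps He.
  apply loc_R_inv in Hl. destruct Hl as [d1 [Hd1 H1]].
  destruct (cont_R_inv Rf x Hc eps He) as [d2 [Hd2 H2]].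
  assert (Hm : 0 < Rmin d1 d2) by (apply Rmin_glb_lt; auto).
  exists (mkposreal _ Hm). intros h Hh Hhd. simpl in Hhd.
  assert (Rabs h < d1) by (eapply Rlt_le_trans; [exact Hhd|apply Rmin_l]).
  assert (Rabs h < d2) by (eapply Rlt_le_trans; [exact Hhd|apply Rmin_r]).
  replace h with ((x + h) - x) at 2 by ring.
  rewrite H1. apply H2. replace (x + h - x) with h by ring. auto.
  replace (x + h - x) with h by ring. auto.
  intro Hx. apply Hh. lra.
Qed.

Lemma sq_deriv (f g : R -> R) x l :
  locally x (fun t => Rabs (f t - f x - l * (t - x)) <= Rabs (g t - l) * Rabs (t - x)) ->
  continuous g x -> g x = l -> is_derive f x l.
Proof.
  intros Hl Hc Hg. apply is_derive_Reals. intros eps He.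
  apply loc_R_inv in Hl. destruct Hl as [d1 [Hd1 H1]].
  destruct (cont_R_inv g x Hc eps He) as [d2 [Hd2 H2]].
  assert (Hm : 0 < Rmin d1 d2) by (apply Rmin_glb_lt; auto).
  exists (mkposreal _ Hm). intros h Hh Hhd. simpl in Hhd.
  assert (Rabs h < d1) by (eapply Rlt_le_trans; [exact Hhd|apply Rmin_l]).
  assert (Rabs h < d2) by (eapply Rlt_le_trans; [exact Hhd|apply Rmin_r]).
  specialize (H1 (x + h)). specialize (H2 (x + h)).
  replace (x + h - x) with h in H1, H2 by ring.
  specialize (H1 H). specialize (H2 H0). rewrite Hg in H2.
  assert (Hah : 0 < Rabs h) by (apply Rabs_pos_lt; auto).
  replace ((f (x + h) - f x) / h - l) with ((f (x + h) - f x - l * h) / h) by (field; auto).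
  unfold Rdiv. rewrite Rabs_mult, Rabs_inv.
  apply (Rmult_lt_reg_r (Rabs h)); auto. rewrite Rmult_assoc, Rinv_l by lra.
  rewrite Rmult_1_r. eapply Rle_lt_trans. exact H1. apply Rmult_lt_compat_r; auto.
Qed.

Lemma squeeze_abs D l m h : l * h <= D -> D <= m * h -> Rabs (D - l * h) <= Rabs (m - l) * Rabs h.
Proof.
  intros A B. rewrite <- Rabs_mult. rewrite Rabs_pos_eq by lra.
  eapply Rle_trans; [|apply Rle_abs]. lra.
Qed.

Definition slope (P : R -> R) s0 dP s := if Req_dec_T s s0 then dP else (P s - P s0) / (s - s0).

Lemma slope_id P s0 dP s : P s = P s0 + slope P s0 dP s * (s - s0).
Proof.
  unfold slope. destruct (Req_dec_T s s0) as [->|Hn]. ring. field. lra.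
Qed.

Lemma slope_cont P s0 dP : is_derive P s0 dP -> continuous (slope P s0 dP) s0.
Proof.
  intros H. apply is_derive_Reals in H. apply cont_R. intros eps He.
  destruct (H eps He) as [d Hd]. exists d. split. apply cond_pos. intros y Hy.
  unfold slope. destruct (Req_dec_T s0 s0) as [_|C]; [|congruence].
  destruct (Req_dec_T y s0) as [->|Hn]. rewrite Rminus_eq_0, Rabs_R0. auto.
  specialize (Hd (y - s0)). replace (s0 + (y - s0)) with y in Hd by ring.
  apply Hd. lra. auto.
Qed.

Lemma implicit_deriv (A P Q : R -> R) t0 dP dQ :
  continuous A t0 ->
  locally t0 (fun t => P (A t) + Q (A t) * t = 0) ->
  is_derive P (A t0) dP -> is_derive Q (A t0) dQ -> dP + dQ * t0 <> 0 ->
  is_derive A t0 (- Q (A t0) / (dP + dQ * t0)).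
Proof.
  intros HA Hl HP HQ Hn. set (s0 := A t0) in *.
  set (K := fun t => slope P s0 dP (A t) + slope Q s0 dQ (A t) * t).
  assert (HK0 : K t0 = dP + dQ * t0).
  { unfold K, slope. fold s0. destruct (Req_dec_T s0 s0); [reflexivity|congruence]. }
  assert (HKc : continuous K t0).
  { unfold K. apply (continuous_plus (fun t => slope P s0 dP (A t)) (fun t => slope Q s0 dQ (A t) * t)).
    apply (continuous_comp A (slope P s0 dP)); auto. apply slope_cont; auto.
    apply (continuous_mult (fun t => slope Q s0 dQ (A t)) (fun t => t)).
    apply (continuous_comp A (slope Q s0 dQ)); auto. apply slope_cont; auto.
    apply continuous_id. }
  assert (HKn : locally t0 (fun t => K t <> 0)) by (apply cont_nonzero; auto; rewrite HK0; auto).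
  pose proof (locally_singleton _ _ Hl) as H0. simpl in H0. fold s0 in H0.
  rewrite <- HK0.
  apply (deriv_slope A (fun t => - Q s0 / K t) t0).
  - apply (filter_imp (fun t => (P (A t) + Q (A t) * t = 0) /\ K t <> 0)).
    2: apply filter_and; auto.
    intros t [H1 H2] Ht. fold s0.
    pose proof (slope_id P s0 dP (A t)). pose proof (slope_id Q s0 dQ (A t)).
    assert (E : (A t - s0) * K t = - Q s0 * (t - t0)).
    { unfold K. rewrite H, H3 in H1. nra. }
    assert (t - t0 <> 0) by lra.
    replace (A t - s0) with (- Q s0 * (t - t0) / K t) by (rewrite <- E; field; auto).
    field. auto.
  - apply (continuous_mult (fun _ => - Q s0) (fun t => / K t)). apply continuous_const.
    apply continuous_comp with (g := Rinv); auto. apply continuous_Rinv. rewrite HK0; auto.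
Qed.

Section Main.
Variable om : R -> R.
Variable hrange : forall t, 0 <= t <= 1 -> 0 <= om t <= 1 / 2.
Variable hcont : forall t, 0 <= t <= 1 ->
     filterlim om (within (fun s => 0 <= s <= 1) (locally t)) (locally (om t)).
Variable hsmooth : forall (n : nat) t, 0 < t < 1 -> ex_derive_n om n t.
Variable hpos : forall t, 0 < t < 1 -> 0 < Derive om t.
Variable h0 : om 0 = 0.
Variable h1 : om 1 = 1 / 2.

Lemma om_der t : 0 < t < 1 -> ex_derive om t.
Proof. intros H. exact (hsmooth 1 t H). Qed.

Lemma om_cont t : 0 < t < 1 -> continuous om t.
Proof. intros H. exact (ex_derive_continuous om t (om_der t H)). Qed.

Lemma dom_cont t : 0 < t < 1 -> continuous (Derive om) t.
Proof. intros H. exact (ex_derive_continuous (Derive om) t (hsmooth 2 t H)). Qed.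

Lemma om_incr s t : 0 < s -> s < t -> t < 1 -> om s < om t.
Proof.
  intros Hs Hst Ht.
  destruct (MVT_cor2 om (Derive om) s t Hst) as [c [Hc Hc']].
  { intros c Hc. apply is_derive_Reals. apply Derive_correct, om_der. lra. }
  assert (0 < Derive om c) by (apply hpos; lra).
  assert (0 < Derive om c * (t - s)) by (apply Rmult_lt_0_compat; lra). lra.
Qed.

Lemma om_pos s : 0 < s < 1 -> 0 < om s.
Proof.
  intros H. assert (om (s/2) < om s) by (apply om_incr; lra).
  assert (0 <= om (s/2)) by (apply hrange; lra). lra.
Qed.

Lemma om_lthalf s : 0 < s < 1 -> om s < 1/2.
Proof.
  intros H. assert (om s < om ((s+1)/2)) by (apply om_incr; lra).
  assert (om ((s+1)/2) <= 1/2) by (apply hrange; lra). lra.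
Qed.

Lemma within_eps t : 0 <= t <= 1 -> forall eps, 0 < eps ->
  exists d, 0 < d /\ forall s, 0 <= s <= 1 -> Rabs (s - t) < d -> Rabs (om s - om t) < eps.
Proof.
  intros Ht eps He. specialize (hcont t Ht).
  assert (L : locally (om t) (fun y => Rabs (y - om t) < eps)).
  { apply loc_R. exists eps. split; auto. }
  specialize (hcont _ L). apply loc_R_inv in hcont.
  destruct hcont as [d [Hd Hq]]. exists d. split; [exact Hd|].
  intros s Hs Hs'. exact (Hq s Hs' Hs).
Qed.

Lemma near0 dl : 0 < dl -> exists s, 0 < s < dl /\ s < 1 /\ om s < dl.
Proof.
  intros Hd. destruct (within_eps 0 ltac:(lra) dl Hd) as [d [Hd' H]].
  set (s := Rmin (Rmin d dl) 1 / 2).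
  assert (0 < Rmin (Rmin d dl) 1) by (repeat apply Rmin_glb_lt; lra).
  assert (Rmin (Rmin d dl) 1 <= d /\ Rmin (Rmin d dl) 1 <= dl /\ Rmin (Rmin d dl) 1 <= 1).
  { split; [|split]. eapply Rle_trans; [apply Rmin_l|apply Rmin_l].
    eapply Rle_trans; [apply Rmin_l|apply Rmin_r]. apply Rmin_r. }
  exists s. unfold s. split; [lra|split; [lra|]].
  specialize (H (Rmin (Rmin d dl) 1 / 2)). rewrite h0 in H.
  assert (Rabs (om (Rmin (Rmin d dl) 1 / 2) - 0) < dl).
  { apply H. lra. rewrite Rminus_0_r, Rabs_pos_eq; lra. }
  rewrite Rminus_0_r in H2. apply Rabs_def2 in H2. lra.
Qed.

Lemma near1 dl : 0 < dl -> exists s, 1 - dl < s < 1 /\ 0 < s /\ 1/2 - dl < om s.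
Proof.
  intros Hd. destruct (within_eps 1 ltac:(lra) dl Hd) as [d [Hd' H]].
  set (m := Rmin (Rmin d dl) 1).
  assert (0 < m) by (unfold m; repeat apply Rmin_glb_lt; lra).
  assert (m <= d /\ m <= dl /\ m <= 1).
  { unfold m; split; [|split]. eapply Rle_trans; [apply Rmin_l|apply Rmin_l].
    eapply Rle_trans; [apply Rmin_l|apply Rmin_r]. apply Rmin_r. }
  exists (1 - m/2). split; [lra|split; [lra|]].
  specialize (H (1 - m/2)). rewrite h1 in H.
  assert (Rabs (om (1 - m/2) - 1/2) < dl).
  { apply H. lra. replace (1 - m/2 - 1) with (-(m/2)) by ring. rewrite Rabs_Ropp, Rabs_pos_eq; lra. }
  apply Rabs_def2 in H2. lra.
Qed.


Lemma cpt_g x1 x2 s : 0 < s < 1 -> continuity_pt (fun s => om s * (x1 + s) - x2) s.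
Proof.
  intros H. apply continuity_pt_minus; [|apply continuity_pt_const; intros ? ?; reflexivity].
  apply continuity_pt_mult.
  - apply continuity_pt_filterlim. apply om_cont, H.
  - apply continuity_pt_plus. apply continuity_pt_const; intros ? ?; reflexivity.
    apply continuity_pt_id.
Qed.

Lemma root_exists x : tri x -> exists a, 0 < a < 1 /\ om a * (fst x + a) = snd x.
Proof.
  destruct x as [x1 x2]. unfold tri; simpl. intros [Hx2 [Hx1 Hx3]].
  set (m := (x1 + 1)/2 - x2).
  assert (Hm : 0 < m) by (unfold m; lra).
  set (dl := Rmin (m/3) (Rmin ((1+x1)/2) (1/2))).
  assert (Hdl : 0 < dl /\ dl <= m/3 /\ dl <= (1+x1)/2 /\ dl <= 1/2).
  { unfold dl. split; [repeat apply Rmin_glb_lt; lra|].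
    split; [apply Rmin_l|]. split.
    eapply Rle_trans; [apply Rmin_r|apply Rmin_l].
    eapply Rle_trans; [apply Rmin_r|apply Rmin_r]. }
  destruct (near1 dl (proj1 Hdl)) as [hi [Hhi1 [Hhi2 Hhi3]]].
  assert (Ghi : x2 < om hi * (x1 + hi)).
  { assert (0 <= 1/2 - dl) by lra. assert (0 < x1 + 1 - dl) by lra.
    assert ((1/2 - dl) * (x1 + 1 - dl) <= om hi * (x1 + hi)).
    { apply Rmult_le_compat; lra. }
    assert (dl * (x1 + 3/2) <= (m/3) * (5/2)).
    { apply Rmult_le_compat; lra. }
    assert (0 <= dl * dl) by nra. unfold m in *. nra. }
  assert (Hlo : exists lo, 0 < lo < hi /\ om lo * (x1 + lo) - x2 < 0).
  { destruct (Rlt_or_le x1 0) as [Hneg|Hnn].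
    - exists (-x1). split; [lra|]. replace (x1 + - x1) with 0 by ring. lra.
    - set (d0 := Rmin (x2/4) (1/2)).
      assert (0 < d0 /\ d0 <= x2/4 /\ d0 <= 1/2).
      { unfold d0. split; [apply Rmin_glb_lt; lra|split; [apply Rmin_l|apply Rmin_r]]. }
      destruct (near0 d0 (proj1 H)) as [s [Hs1 [Hs2 Hs3]]].
      exists s. split; [lra|].
      assert (0 <= om s) by (apply hrange; lra).
      assert (om s * (x1 + s) <= d0 * (3/2)) by (apply Rmult_le_compat; lra). lra. }
  destruct Hlo as [lo [Hlo1 Hlo2]].
  destruct (Ranalysis5.IVT_interv (fun s => om s * (x1 + s) - x2) lo hi) as [a [Ha1 Ha2]].
  - intros a Ha. apply cpt_g. lra.
  - lra.
  - exact Hlo2.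
  - lra.
  - exists a. split; [lra|]. simpl in Ha2. lra.
Qed.

Lemma root_pos x a : tri x -> 0 < a < 1 -> om a * (fst x + a) = snd x -> 0 < fst x + a.
Proof.
  destruct x as [x1 x2]. unfold tri; simpl. intros Ht Ha Hr.
  assert (0 < om a) by (apply om_pos; auto).
  destruct (Rlt_or_le 0 (x1 + a)) as [?|Hle]; auto.
  assert (om a * (x1 + a) <= 0) by nra. lra.
Qed.

Lemma root_sign x a c : tri x -> 0 < a < 1 -> om a * (fst x + a) = snd x -> 0 < c < 1 ->
  (c < a -> om c * (fst x + c) < snd x) /\ (a < c -> snd x < om c * (fst x + c)).
Proof.
  intros Ht Ha Hr Hc. pose proof (root_pos x a Ht Ha Hr) as Hp.
  pose proof Ht as [Hx2 _].
  assert (0 < om a) by (apply om_pos; auto).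
  assert (0 < om c) by (apply om_pos; auto).
  split; intros Hca.
  - assert (om c < om a) by (apply om_incr; lra).
    destruct (Rlt_or_le 0 (fst x + c)) as [Hp'|Hle].
    + rewrite <- Hr. apply Rmult_gt_0_lt_compat; lra.
    + assert (om c * (fst x + c) <= 0) by nra. lra.
  - assert (om a < om c) by (apply om_incr; lra).
    rewrite <- Hr. apply Rmult_gt_0_lt_compat; lra.
Qed.

Lemma root_unique x a b : tri x -> 0 < a < 1 -> om a * (fst x + a) = snd x ->
  0 < b < 1 -> om b * (fst x + b) = snd x -> a = b.
Proof.
  intros Ht Ha Hra Hb Hrb.
  destruct (Rtotal_order a b) as [H|[H|H]]; auto.
  - destruct (root_sign x a b Ht Ha Hra Hb) as [_ H2]. specialize (H2 H). lra.
  - destruct (root_sign x a b Ht Ha Hra Hb) as [H2 _]. specialize (H2 H). lra.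
Qed.

Definition aa (x : R * R) : R :=
  epsilon (inhabits 0) (fun a => 0 < a < 1 /\ om a * (fst x + a) = snd x).

Lemma aa_spec x : tri x -> 0 < aa x < 1 /\ om (aa x) * (fst x + aa x) = snd x.
Proof.
  intros Ht. unfold aa. apply (epsilon_spec (inhabits 0) (fun a => 0 < a < 1 /\ om a * (fst x + a) = snd x)).
  apply root_exists, Ht.
Qed.

Definition Sq b := sqrt (1 + om b * om b).
Lemma Sq_sq b : Sq b * Sq b = 1 + om b * om b.
Proof. unfold Sq. apply sqrt_sqrt. pose proof (Rle_0_sqr (om b)). unfold Rsqr in *. lra. Qed.
Lemma Sq_ge1 b : 1 <= Sq b.
Proof. unfold Sq. pose proof (Rle_0_sqr (om b)). unfold Rsqr in *. apply Rle_trans with (sqrt 1). rewrite sqrt_1; lra. apply sqrt_le_1_alt. lra. Qed.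

Definition ig s := / Sq s.
Definition Psi b := RInt ig (1/2) b.
Definition w b (x : R * R) := ((fst x + b) + om b * snd x) / Sq b - Psi b.

Lemma ig_cont s : 0 < s < 1 -> continuous ig s.
Proof.
  intros H. unfold ig, Sq. apply continuous_Rinv_comp.
  - apply continuous_sqrt_comp.
    apply (continuous_plus (fun _ => 1) (fun s => om s * om s)).
    apply continuous_const.
    apply (continuous_mult om om); apply om_cont; auto.
  - pose proof (Sq_ge1 s) as Hs. unfold Sq in Hs. lra.
Qed.

Lemma ig_bnd s : 0 < ig s <= 1.
Proof.
  unfold ig. pose proof (Sq_ge1 s). split. apply Rinv_0_lt_compat; lra.
  rewrite <- Rinv_1. apply Rinv_le_contravar; lra.
Qed.

Lemma Psi_ex b : 0 < b < 1 -> ex_RInt ig (1/2) b.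
Proof.
  intros H. apply (ex_RInt_continuous (V:=R_CompleteNormedModule)). intros z Hz. apply ig_cont.
  assert (Rmin (1/2) b > 0) by (apply Rmin_glb_lt; lra).
  assert (Rmax (1/2) b < 1) by (apply Rmax_lub_lt; lra). lra.
Qed.

Lemma Psi_der b : 0 < b < 1 -> is_derive Psi b (ig b).
Proof.
  intros H. apply is_derive_RInt with (a := 1/2).
  - apply loc_R. exists (Rmin b (1 - b)). split. apply Rmin_glb_lt; lra.
    intros y Hy. assert (Rmin b (1-b) <= b) by apply Rmin_l.
    assert (Rmin b (1-b) <= 1 - b) by apply Rmin_r.
    apply Rabs_def2 in Hy. apply (RInt_correct (V:=R_CompleteNormedModule) ig). apply Psi_ex. lra.
  - apply ig_cont, H.
Qed.

Lemma Psi_bnd b : 0 < b < 1 -> Rabs (Psi b) <= 1.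
Proof.
  intros H. unfold Psi. destruct (Rle_or_lt (1/2) b) as [Hb|Hb].
  - eapply Rle_trans. apply abs_RInt_le_const with (M := 1). lra. apply Psi_ex, H.
    intros t _. pose proof (ig_bnd t). rewrite Rabs_pos_eq; lra. lra.
  - assert (E : ex_RInt ig b (1/2)) by (apply ex_RInt_swap, Psi_ex, H).
    rewrite <- (opp_RInt_swap ig b (1/2) E).
    change (Rabs (- RInt ig b (1/2)) <= 1). rewrite Rabs_Ropp.
    eapply Rle_trans. apply abs_RInt_le_const with (M := 1). lra. exact E.
    intros t _. pose proof (ig_bnd t). rewrite Rabs_pos_eq; lra. lra.
Qed.

Definition dw b (x : R * R) :=
  Derive om b * (snd x - om b * (fst x + b)) / (Sq b * Sq b * Sq b).

Lemma w_der x b : 0 < b < 1 -> is_derive (fun b => w b x) b (dw b x).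
Proof.
  intros Hb.
  assert (H1 : is_derive (fun b => ((fst x + b) + om b * snd x) / Sq b) b
     ((1 + Derive om b * snd x) / Sq b - ((fst x + b) + om b * snd x) * (om b * Derive om b) / (Sq b * Sq b * Sq b))).
  { unfold Sq. pose proof (om_der b Hb). auto_derive.
    - repeat split; auto. nra. pose proof (Sq_ge1 b); unfold Sq in *; lra.
    - pose proof (Sq_ge1 b). unfold Sq in *.
      change (Derive (fun x0 => om x0) b) with (Derive om b).
      set (s := sqrt (1 + om b * om b)) in *. set (d := Derive om b).
      field. lra. }
  pose proof (is_derive_minus _ _ _ _ _ H1 (Psi_der b Hb)) as H.
  assert (E : dw b x = minus
       ((1 + Derive om b * snd x) / Sq b -
        (fst x + b + om b * snd x) * (om b * Derive om b) /
        (Sq b * Sq b * Sq b)) (ig b)).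
  { unfold dw, ig, minus, plus, opp; simpl. pose proof (Sq_ge1 b). pose proof (Sq_sq b).
    replace (snd x - om b * (fst x + b)) with (snd x * (Sq b * Sq b) - om b * (fst x + b) - om b * om b * snd x)
      by (rewrite H2; ring).
    field. lra. }
  rewrite E. eapply is_derive_ext; [|exact H].
  intros t. unfold w, minus, plus, opp; simpl. ring.
Qed.

Lemma dw_sign x a c : tri x -> 0 < a < 1 -> om a * (fst x + a) = snd x -> 0 < c < 1 ->
  (c < a -> 0 < dw c x) /\ (a < c -> dw c x < 0).
Proof.
  intros Ht Ha Hr Hc. destruct (root_sign x a c Ht Ha Hr Hc) as [A B].
  pose proof (hpos c Hc). pose proof (Sq_ge1 c).
  assert (0 < Sq c * Sq c * Sq c) by (repeat apply Rmult_lt_0_compat; lra).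
  unfold dw. split; intros Hca.
  - specialize (A Hca). apply Rdiv_lt_0_compat; auto. apply Rmult_lt_0_compat; lra.
  - specialize (B Hca).
    assert (0 < Derive om c * (om c * (fst x + c) - snd x)) by (apply Rmult_lt_0_compat; lra).
    assert (0 < Derive om c * (om c * (fst x + c) - snd x) * / (Sq c * Sq c * Sq c))
      by (apply Rmult_lt_0_compat; [auto|apply Rinv_0_lt_compat; auto]).
    unfold Rdiv. lra.
Qed.

Lemma w_lt x a b : tri x -> 0 < a < 1 -> om a * (fst x + a) = snd x -> 0 < b < 1 -> b <> a ->
  w b x < w a x.
Proof.
  intros Ht Ha Hr Hb Hne.
  destruct (Rtotal_order b a) as [H|[H|H]]; [|congruence|].
  - destruct (MVT_cor2 (fun b => w b x) (fun b => dw b x) b a H) as [c [Hc1 Hc2]].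
    { intros c Hc. apply is_derive_Reals, w_der. lra. }
    destruct (dw_sign x a c Ht Ha Hr ltac:(lra)) as [P _]. specialize (P (proj2 Hc2)).
    assert (0 < dw c x * (a - b)) by (apply Rmult_lt_0_compat; lra). lra.
  - destruct (MVT_cor2 (fun b => w b x) (fun b => dw b x) a b H) as [c [Hc1 Hc2]].
    { intros c Hc. apply is_derive_Reals, w_der. lra. }
    destruct (dw_sign x a c Ht Ha Hr ltac:(lra)) as [_ P]. specialize (P (proj1 Hc2)).
    assert (0 < - dw c x * (b - a)) by (apply Rmult_lt_0_compat; lra). lra.
Qed.

Lemma w_diff b x y : w b x - w b y = ((fst x - fst y) + om b * (snd x - snd y)) / Sq b.
Proof. unfold w. pose proof (Sq_ge1 b). field. lra. Qed.

Lemma cs_ineq A B C : 0 <= B -> 0 <= C -> A * A <= B * C -> Rabs A <= sqrt B * sqrt C.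
Proof.
  intros HB HC H. rewrite <- sqrt_mult by auto.
  rewrite <- sqrt_Rsqr_abs. apply sqrt_le_1_alt. unfold Rsqr. exact H.
Qed.

Lemma edist_sym x y : edist x y = edist y x.
Proof. unfold edist. f_equal. ring. Qed.

Lemma w_lip b x y : w b x - w b y <= edist x y.
Proof.
  rewrite w_diff. set (N := fst x - fst y + om b * (snd x - snd y)).
  pose proof (Sq_ge1 b).
  assert (HN : Rabs N <= Sq b * edist x y).
  { unfold Sq, edist, N. apply cs_ineq.
    pose proof (Rle_0_sqr (om b)); unfold Rsqr in *; lra.
    pose proof (Rle_0_sqr (fst x - fst y)); pose proof (Rle_0_sqr (snd x - snd y)); unfold Rsqr in *; nra.
    pose proof (Rle_0_sqr (om b * (fst x - fst y) - (snd x - snd y))). unfold Rsqr in *. nra. }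
  assert (N <= Rabs N) by apply Rle_abs.
  apply (Rmult_le_reg_r (Sq b)). lra. unfold Rdiv. rewrite Rmult_assoc, Rinv_l by lra. lra.
Qed.

Lemma w_bound x b : 0 < b < 1 -> w b x <= Rabs (fst x) + Rabs (snd x) + 3.
Proof.
  intros Hb. unfold w. set (A := fst x + b + om b * snd x).
  pose proof (Sq_ge1 b). pose proof (Psi_bnd b Hb).
  assert (HA : A / Sq b <= Rabs A).
  { assert (A <= Rabs A) by apply Rle_abs. assert (0 <= Rabs A) by apply Rabs_pos.
    apply (Rmult_le_reg_r (Sq b)). lra. unfold Rdiv. rewrite Rmult_assoc, Rinv_l by lra. nra. }
  assert (Rabs A <= Rabs (fst x) + Rabs (snd x) + 1).
  { unfold A. eapply Rle_trans. apply Rabs_triang. eapply Rle_trans.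
    apply Rplus_le_compat. apply Rabs_triang. rewrite Rabs_mult. apply Rle_refl.
    assert (Rabs (om b) <= 1) by (rewrite Rabs_pos_eq; pose proof (hrange b ltac:(lra)); lra).
    assert (Rabs b <= 1) by (rewrite Rabs_pos_eq; lra).
    pose proof (Rabs_pos (snd x)). pose proof (Rabs_pos (om b)). nra. }
  apply Rabs_le_between in H0. lra.
Qed.

Definition Eset x := fun r => exists b, 0 < b < 1 /\ r = w b x.

Lemma E_bound x : bound (Eset x).
Proof.
  exists (Rabs (fst x) + Rabs (snd x) + 3). intros r [b [Hb ->]]. apply w_bound, Hb.
Qed.

Lemma E_ne x : exists r, Eset x r.
Proof. exists (w (1/2) x). exists (1/2). split; [lra|reflexivity]. Qed.

Definition u x := proj1_sig (completeness (Eset x) (E_bound x) (E_ne x)).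

Lemma u_lub x : is_lub (Eset x) (u x).
Proof. unfold u. apply proj2_sig. Qed.

Lemma u_ge x b : 0 < b < 1 -> w b x <= u x.
Proof. intros Hb. apply (proj1 (u_lub x)). exists b. split; auto. Qed.

Lemma u_le x M : (forall b, 0 < b < 1 -> w b x <= M) -> u x <= M.
Proof. intros H. apply (proj2 (u_lub x)). intros r [b [Hb ->]]. apply H, Hb. Qed.

Lemma u_eq x a : tri x -> 0 < a < 1 -> om a * (fst x + a) = snd x -> u x = w a x.
Proof.
  intros Ht Ha Hr. apply Rle_antisym.
  - apply u_le. intros b Hb. destruct (Req_dec b a) as [->|Hne]. lra.
    apply Rlt_le, (w_lt x a b); auto.
  - apply u_ge, Ha.
Qed.

Lemma u_lip x y : u x - u y <= edist x y.
Proof.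
  assert (u x <= u y + edist x y); [|lra].
  apply u_le. intros b Hb. pose proof (w_lip b x y). pose proof (u_ge y b Hb). lra.
Qed.

Lemma u_lip_abs x y : Rabs (u x - u y) <= edist x y.
Proof.
  apply Rabs_le. pose proof (u_lip x y). pose proof (u_lip y x). rewrite edist_sym in H0. lra.
Qed.

Lemma on_l_of x a : tri x -> 0 < a < 1 -> om a * (fst x + a) = snd x -> on_l om a x.
Proof.
  intros Ht Ha Hr. pose proof (root_pos x a Ht Ha Hr). destruct Ht as [_ [H1 _]].
  split; [lra|split; lra].
Qed.

Lemma eq_dir x y : tri x -> tri y -> u x - u y = edist x y ->
  exists a, 0 < a < 1 /\ on_l om a x /\ on_l om a y.
Proof.
  intros Hx Hy He. destruct (aa_spec x Hx) as [Ha Hr].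
  destruct (aa_spec y Hy) as [Hb Hrb].
  set (a := aa x) in *.
  rewrite (u_eq x a Hx Ha Hr) in He.
  pose proof (u_ge y a Ha). pose proof (w_lip a x y).
  assert (Hwy : w a y = u y) by lra.
  assert (a = aa y).
  { destruct (Req_dec a (aa y)) as [?|Hne]; auto.
    pose proof (w_lt y (aa y) a Hy Hb Hrb Ha Hne).
    rewrite <- (u_eq y (aa y) Hy Hb Hrb) in H1. lra. }
  exists a. split; auto. split. apply on_l_of; auto.
  apply on_l_of; auto. rewrite H1. auto.
Qed.

Lemma eq_back x y a : tri x -> tri y -> 0 < a < 1 -> on_l om a x -> on_l om a y ->
  Rabs (u x - u y) = edist x y.
Proof.
  intros Hx Hy Ha [Hx1 _] [Hy1 _].
  rewrite (u_eq x a Hx Ha (eq_sym Hx1)), (u_eq y a Hy Ha (eq_sym Hy1)).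
  rewrite w_diff. pose proof (Sq_ge1 a). pose proof (Sq_sq a).
  set (dx := fst x - fst y).
  replace (snd x - snd y) with (om a * dx) by (unfold dx; rewrite Hx1, Hy1; ring).
  replace ((dx + om a * (om a * dx)) / Sq a) with (dx * Sq a).
  2:{ replace (dx + om a * (om a * dx)) with (dx * (Sq a * Sq a)) by (rewrite H0; ring). field. lra. }
  unfold edist. fold dx. rewrite Hx1, Hy1.
  replace ((dx ^ 2 + (om a * (fst x + a) - om a * (fst y + a)) ^ 2)) with (Rsqr dx * (1 + om a * om a))
    by (unfold dx, Rsqr; ring).
  rewrite sqrt_mult. rewrite sqrt_Rsqr_abs. rewrite Rabs_mult. rewrite (Rabs_pos_eq (Sq a)) by lra.
  reflexivity. apply Rle_0_sqr. pose proof (Rle_0_sqr (om a)). unfold Rsqr in *. lra.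
Qed.

Lemma eq_char x y : tri x -> tri y ->
  (Rabs (u x - u y) = edist x y <-> exists a, 0 < a < 1 /\ on_l om a x /\ on_l om a y).
Proof.
  intros Hx Hy. split.
  - intros H. destruct (Rle_or_lt 0 (u x - u y)) as [Hs|Hs].
    + rewrite Rabs_pos_eq in H by auto. apply eq_dir; auto.
    + rewrite Rabs_left in H by auto. rewrite edist_sym in H.
      destruct (eq_dir y x Hy Hx ltac:(lra)) as [a [Ha [A B]]]. exists a; auto.
  - intros [a [Ha [A B]]]. apply (eq_back x y a); auto.
Qed.

Lemma tri_open p : tri p -> exists d, 0 < d /\ forall q,
  Rabs (fst q - fst p) < d -> Rabs (snd q - snd p) < d -> tri q.
Proof.
  destruct p as [p1 p2]. unfold tri; simpl. intros [A [B C]].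
  set (m := (p1 + 1)/2 - p2).
  exists (Rmin p2 (Rmin (1 - p1) (m/2))). split.
  { repeat apply Rmin_glb_lt; unfold m; lra. }
  assert (Rmin p2 (Rmin (1 - p1) (m/2)) <= p2) by apply Rmin_l.
  assert (Rmin p2 (Rmin (1 - p1) (m/2)) <= 1 - p1) by (eapply Rle_trans; [apply Rmin_r|apply Rmin_l]).
  assert (Rmin p2 (Rmin (1 - p1) (m/2)) <= m/2) by (eapply Rle_trans; [apply Rmin_r|apply Rmin_r]).
  intros [q1 q2]; simpl. intros Q1 Q2. apply Rabs_def2 in Q1. apply Rabs_def2 in Q2.
  unfold m in *. split; [lra|split; lra].
Qed.

Lemma loc_tri p : tri p -> locally p tri.
Proof. intros H. apply loc_R2. apply tri_open, H. Qed.

Lemma loc_tri1 q : tri q -> locally (fst q) (fun t => tri (t, snd q)).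
Proof.
  intros H. destruct (tri_open q H) as [d [Hd Hq]]. apply loc_R. exists d. split; auto.
  intros y Hy. apply Hq; simpl; auto. rewrite Rminus_eq_0, Rabs_R0; auto.
Qed.

Lemma loc_tri2 q : tri q -> locally (snd q) (fun t => tri (fst q, t)).
Proof.
  intros H. destruct (tri_open q H) as [d [Hd Hq]]. apply loc_R. exists d. split; auto.
  intros y Hy. apply Hq; simpl; auto. rewrite Rminus_eq_0, Rabs_R0; auto.
Qed.

Lemma aa_cont2 p : tri p -> cont2 aa p.
Proof.
  intros Hp eps He. destruct (aa_spec p Hp) as [Ha Hr]. set (a0 := aa p) in *.
  set (da := Rmin (eps/2) (Rmin (a0/2) ((1-a0)/2))).
  assert (Hda : 0 < da /\ da <= eps/2 /\ da <= a0/2 /\ da <= (1-a0)/2).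
  { unfold da. split; [repeat apply Rmin_glb_lt; lra|]. split; [apply Rmin_l|split].
    eapply Rle_trans; [apply Rmin_r|apply Rmin_l]. eapply Rle_trans; [apply Rmin_r|apply Rmin_r]. }
  set (b1 := a0 - da). set (b2 := a0 + da).
  assert (Hb1 : 0 < b1 < 1) by (unfold b1; lra). assert (Hb2 : 0 < b2 < 1) by (unfold b2; lra).
  destruct (root_sign p a0 b1 Hp Ha Hr Hb1) as [G1 _]. specialize (G1 ltac:(unfold b1; lra)).
  destruct (root_sign p a0 b2 Hp Ha Hr Hb2) as [_ G2]. specialize (G2 ltac:(unfold b2; lra)).
  set (m := Rmin (snd p - om b1 * (fst p + b1)) (om b2 * (fst p + b2) - snd p)).
  assert (Hm : 0 < m /\ m <= snd p - om b1 * (fst p + b1) /\ m <= om b2 * (fst p + b2) - snd p).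
  { unfold m. split; [apply Rmin_glb_lt; lra|split; [apply Rmin_l|apply Rmin_r]]. }
  destruct (tri_open p Hp) as [dT [HdT HT]].
  exists (Rmin dT (m/2)). split. apply Rmin_glb_lt; lra.
  intros q Q1 Q2.
  assert (R1 : Rabs (fst q - fst p) < dT) by (eapply Rlt_le_trans; [exact Q1|apply Rmin_l]).
  assert (R2 : Rabs (snd q - snd p) < dT) by (eapply Rlt_le_trans; [exact Q2|apply Rmin_l]).
  assert (R3 : Rabs (fst q - fst p) < m/2) by (eapply Rlt_le_trans; [exact Q1|apply Rmin_r]).
  assert (R4 : Rabs (snd q - snd p) < m/2) by (eapply Rlt_le_trans; [exact Q2|apply Rmin_r]).
  assert (Hq : tri q) by (apply HT; auto).
  destruct (aa_spec q Hq) as [Hqa Hqr].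
  apply Rabs_def2 in R4.
  pose proof (hrange b1 ltac:(lra)) as O1. pose proof (hrange b2 ltac:(lra)) as O2.
  assert (K1 : om b1 * (fst q + b1) < snd q).
  { assert (om b1 * (fst q + b1) = om b1 * (fst p + b1) + om b1 * (fst q - fst p)) by ring.
    assert (X : Rabs (om b1 * (fst q - fst p)) <= m/2).
    { rewrite Rabs_mult, (Rabs_pos_eq (om b1)) by lra. pose proof (Rabs_pos (fst q - fst p)). nra. }
    apply Rabs_le_between in X. lra. }
  assert (K2 : snd q < om b2 * (fst q + b2)).
  { assert (om b2 * (fst q + b2) = om b2 * (fst p + b2) + om b2 * (fst q - fst p)) by ring.
    assert (X : Rabs (om b2 * (fst q - fst p)) <= m/2).
    { rewrite Rabs_mult, (Rabs_pos_eq (om b2)) by lra. pose proof (Rabs_pos (fst q - fst p)). nra. }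
    apply Rabs_le_between in X. lra. }
  assert (b1 < aa q).
  { destruct (Rlt_or_le b1 (aa q)) as [?|Hle]; auto. destruct Hle as [Hlt|Heq].
    - destruct (root_sign q (aa q) b1 Hq Hqa Hqr Hb1) as [_ X]. specialize (X Hlt). lra.
    - rewrite <- Heq in K1. rewrite Hqr in K1. lra. }
  assert (aa q < b2).
  { destruct (Rlt_or_le (aa q) b2) as [?|Hle]; auto. destruct Hle as [Hlt|Heq].
    - destruct (root_sign q (aa q) b2 Hq Hqa Hqr Hb2) as [X _]. specialize (X Hlt). lra.
    - rewrite Heq in K2. rewrite Hqr in K2. lra. }
  apply Rabs_def1; unfold b1, b2 in *; lra.
Qed.

Lemma grad_sq q q' : tri q -> tri q' ->
  w (aa q) q' - w (aa q) q <= u q' - u q <= w (aa q') q' - w (aa q') q.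
Proof.
  intros Hq Hq'. destruct (aa_spec q Hq) as [A1 A2]. destruct (aa_spec q' Hq') as [B1 B2].
  rewrite (u_eq q (aa q) Hq A1 A2) at 1 2. rewrite (u_eq q' (aa q') Hq' B1 B2) at 2.
  pose proof (u_ge q' (aa q) A1). pose proof (u_ge q (aa q') B1).
  rewrite <- (u_eq q (aa q) Hq A1 A2) in *. lra.
Qed.

Definition e2 b := om b * ig b.

Lemma aa_in q : tri q -> 0 < aa q < 1.
Proof. intros H. apply aa_spec, H. Qed.

Lemma d1u_der q : tri q -> is_derive (fun t => u (t, snd q)) (fst q) (ig (aa q)).
Proof.
  intros Hq. destruct q as [q1 q2]. simpl.
  apply sq_deriv with (g := fun t => ig (aa (t, q2))); [| |reflexivity].
  - apply (filter_imp (fun t => tri (t, q2))); [|apply (loc_tri1 (q1,q2) Hq)].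
    intros t Ht. pose proof (grad_sq (q1,q2) (t,q2) Hq Ht) as [G1 G2].
    rewrite !w_diff in G1, G2. simpl in G1, G2.
    assert (E1 : forall b, (t - q1 + om b * (q2 - q2)) / Sq b = ig b * (t - q1))
      by (intros; unfold ig; pose proof (Sq_ge1 b); field; lra).
    rewrite !E1 in G1, G2. apply squeeze_abs; auto.
  - apply (continuous_comp (fun t => aa (t, q2)) ig).
    apply (cont2_line1 aa (q1, q2)), aa_cont2, Hq.
    apply ig_cont, aa_in, Hq.
Qed.

Lemma e2_cont s : 0 < s < 1 -> continuous e2 s.
Proof.
  intros H. unfold e2. apply (continuous_mult om ig). apply om_cont, H. apply ig_cont, H.
Qed.

Lemma d2u_der q : tri q -> is_derive (fun t => u (fst q, t)) (snd q) (e2 (aa q)).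
Proof.
  intros Hq. destruct q as [q1 q2]. simpl.
  apply sq_deriv with (g := fun t => e2 (aa (q1, t))); [| |reflexivity].
  - apply (filter_imp (fun t => tri (q1, t))); [|apply (loc_tri2 (q1,q2) Hq)].
    intros t Ht. pose proof (grad_sq (q1,q2) (q1,t) Hq Ht) as [G1 G2].
    rewrite !w_diff in G1, G2. simpl in G1, G2.
    assert (E1 : forall b, (q1 - q1 + om b * (t - q2)) / Sq b = e2 b * (t - q2))
      by (intros; unfold e2, ig; pose proof (Sq_ge1 b); field; lra).
    rewrite !E1 in G1, G2. apply squeeze_abs; auto.
  - apply (continuous_comp (fun t => aa (q1, t)) e2).
    apply (cont2_line2 aa (q1, q2)), aa_cont2, Hq.
    apply e2_cont, aa_in, Hq.
Qed.

Lemma d1u_eq q : tri q -> Defs.d1 u q = ig (aa q).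
Proof. intros H. unfold Defs.d1. apply is_derive_unique, d1u_der, H. Qed.

Lemma d2u_eq q : tri q -> Defs.d2 u q = e2 (aa q).
Proof. intros H. unfold Defs.d2. apply is_derive_unique, d2u_der, H. Qed.

Lemma cmul {U : UniformSpace} (f g : U -> R) p : continuous f p -> continuous g p ->
  continuous (fun q => f q * g q) p.
Proof. intros. exact (continuous_mult f g p H H0). Qed.
Lemma cplus {U : UniformSpace} (f g : U -> R) p : continuous f p -> continuous g p ->
  continuous (fun q => f q + g q) p.
Proof. intros. exact (continuous_plus f g p H H0). Qed.
Lemma copp {U : UniformSpace} (f : U -> R) p : continuous f p -> continuous (fun q => - f q) p.
Proof. intros. exact (continuous_opp f p H). Qed.
Lemma cinv {U : UniformSpace} (f : U -> R) p : continuous f p -> f p <> 0 -> continuous (fun q => / f q) p.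
Proof. intros. apply (continuous_comp f Rinv). auto. apply continuous_Rinv, H0. Qed.
Lemma cdiv {U : UniformSpace} (f g : U -> R) p : continuous f p -> continuous g p -> g p <> 0 ->
  continuous (fun q => f q / g q) p.
Proof. intros. apply (cmul f (fun q => / g q)); auto. apply cinv; auto. Qed.
Lemma ccomp {U : UniformSpace} (f : U -> R) (g : R -> R) p : continuous f p -> continuous g (f p) ->
  continuous (fun q => g (f q)) p.
Proof. intros. apply (continuous_comp f g); auto. Qed.

Lemma Sq_cont s : 0 < s < 1 -> continuous Sq s.
Proof.
  intros H. unfold Sq. apply continuous_sqrt_comp. apply cplus. apply continuous_const.
  apply cmul; apply om_cont; auto.
Qed.

Definition dig b := - (om b * Derive om b) / (Sq b * Sq b * Sq b).
Definition de2 b := Derive om b / (Sq b * Sq b * Sq b).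

Lemma Sq3_pos b : 0 < Sq b * Sq b * Sq b.
Proof. pose proof (Sq_ge1 b). repeat apply Rmult_lt_0_compat; lra. Qed.

Lemma dig_cont s : 0 < s < 1 -> continuous dig s.
Proof.
  intros H. unfold dig. apply cdiv. apply copp. apply cmul. apply om_cont, H. apply dom_cont, H.
  apply cmul. apply cmul. 1-3: apply Sq_cont, H. pose proof (Sq3_pos s). lra.
Qed.

Lemma de2_cont s : 0 < s < 1 -> continuous de2 s.
Proof.
  intros H. unfold de2. apply cdiv. apply dom_cont, H.
  apply cmul. apply cmul. 1-3: apply Sq_cont, H. pose proof (Sq3_pos s). lra.
Qed.

Lemma ig_der b : 0 < b < 1 -> is_derive ig b (dig b).
Proof.
  intros Hb. pose proof (om_der b Hb). pose proof (Sq_ge1 b). unfold ig, dig, Sq in *. auto_derive.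
  - repeat split; auto. pose proof (Rle_0_sqr (om b)). unfold Rsqr in *. lra. lra.
  - change (Derive (fun x0 => om x0) b) with (Derive om b).
    set (s := sqrt (1 + om b * om b)) in *. field. lra.
Qed.

Lemma e2_der b : 0 < b < 1 -> is_derive e2 b (de2 b).
Proof.
  intros Hb. pose proof (om_der b Hb). pose proof (Sq_ge1 b). pose proof (Sq_sq b).
  unfold e2, ig, de2, Sq in *. auto_derive.
  - repeat split; auto. pose proof (Rle_0_sqr (om b)). unfold Rsqr in *. lra. lra.
  - change (Derive (fun x0 => om x0) b) with (Derive om b).
    set (s := sqrt (1 + om b * om b)) in *. set (d := Derive om b).
    assert (Ed : d * (s * s) - d * (om b * om b) = d) by (rewrite H1; ring).
    transitivity ((d * (s * s) - d * (om b * om b)) / (s * s * s)).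
    field. lra. rewrite Ed. reflexivity.
Qed.

Definition Dn (q : R * R) := Derive om (aa q) * (fst q + aa q) + om (aa q).

Lemma Dn_pos q : tri q -> 0 < Dn q.
Proof.
  intros Hq. destruct (aa_spec q Hq) as [A B]. pose proof (root_pos q (aa q) Hq A B).
  pose proof (hpos _ A). pose proof (om_pos _ A). unfold Dn.
  assert (0 < Derive om (aa q) * (fst q + aa q)) by (apply Rmult_lt_0_compat; lra). lra.
Qed.

Lemma aa_d2 q : tri q -> is_derive (fun t => aa (fst q, t)) (snd q) (/ Dn q).
Proof.
  intros Hq. destruct q as [q1 q2]. simpl.
  pose proof (Dn_pos _ Hq) as HD. unfold Dn in *. simpl in *.
  pose proof (aa_in _ Hq) as Ha.
  assert (I := implicit_deriv (fun t => aa (q1, t)) (fun s => om s * (q1 + s)) (fun _ => -1) q2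
     (Derive om (aa (q1,q2)) * (q1 + aa (q1,q2)) + om (aa (q1,q2))) 0).
  replace (/ _) with (- -1 / (Derive om (aa (q1, q2)) * (q1 + aa (q1, q2)) + om (aa (q1, q2)) + 0 * q2))
    by (field; lra).
  apply I; clear I.
  - apply (cont2_line2 aa (q1,q2)), aa_cont2, Hq.
  - apply (filter_imp (fun t => tri (q1, t))); [|apply (loc_tri2 (q1,q2) Hq)].
    intros t Ht. destruct (aa_spec _ Ht) as [_ E]. simpl in E. lra.
  - pose proof (om_der _ Ha). auto_derive. auto.
    change (Derive (fun x0 => om x0) (aa (q1, q2))) with (Derive om (aa (q1, q2))). ring.
  - auto_derive; auto.
  - lra.
Qed.

Lemma aa_d1 q : tri q -> is_derive (fun t => aa (t, snd q)) (fst q) (- om (aa q) / Dn q).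
Proof.
  intros Hq. destruct q as [q1 q2]. simpl.
  pose proof (Dn_pos _ Hq) as HD. unfold Dn in *. simpl in *.
  pose proof (aa_in _ Hq) as Ha.
  assert (I := implicit_deriv (fun t => aa (t, q2)) (fun s => om s * s - q2) om q1
     (Derive om (aa (q1,q2)) * aa (q1,q2) + om (aa (q1,q2))) (Derive om (aa (q1,q2)))).
  replace (Derive om (aa (q1, q2)) * (q1 + aa (q1, q2)) + om (aa (q1, q2))) with
    (Derive om (aa (q1,q2)) * aa (q1,q2) + om (aa (q1,q2)) + Derive om (aa (q1,q2)) * q1) by ring.
  apply I; clear I.
  - apply (cont2_line1 aa (q1,q2)), aa_cont2, Hq.
  - apply (filter_imp (fun t => tri (t, q2))); [|apply (loc_tri1 (q1,q2) Hq)].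
    intros t Ht. destruct (aa_spec _ Ht) as [_ E]. simpl in E. lra.
  - pose proof (om_der _ Ha). auto_derive. auto.
    change (Derive (fun x0 => om x0) (aa (q1, q2))) with (Derive om (aa (q1, q2))). ring.
  - apply Derive_correct, om_der, Ha.
  - lra.
Qed.

Lemma d11_der q : tri q ->
  is_derive (fun t => Defs.d1 u (t, snd q)) (fst q) ((- om (aa q) / Dn q) * dig (aa q)).
Proof.
  intros Hq. destruct q as [q1 q2]. simpl. pose proof (aa_in _ Hq) as Ha.
  apply (is_derive_ext_loc (fun t => ig (aa (t, q2)))).
  - apply (filter_imp (fun t => tri (t, q2))); [|apply (loc_tri1 (q1,q2) Hq)].
    intros t Ht. rewrite d1u_eq; auto.
  - exact (is_derive_comp ig (fun t => aa (t, q2)) q1 _ _ (ig_der _ Ha) (aa_d1 _ Hq)).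
Qed.

Lemma d21_der q : tri q ->
  is_derive (fun t => Defs.d1 u (fst q, t)) (snd q) ((/ Dn q) * dig (aa q)).
Proof.
  intros Hq. destruct q as [q1 q2]. simpl. pose proof (aa_in _ Hq) as Ha.
  apply (is_derive_ext_loc (fun t => ig (aa (q1, t)))).
  - apply (filter_imp (fun t => tri (q1, t))); [|apply (loc_tri2 (q1,q2) Hq)].
    intros t Ht. rewrite d1u_eq; auto.
  - exact (is_derive_comp ig (fun t => aa (q1, t)) q2 _ _ (ig_der _ Ha) (aa_d2 _ Hq)).
Qed.

Lemma d12_der q : tri q ->
  is_derive (fun t => Defs.d2 u (t, snd q)) (fst q) ((- om (aa q) / Dn q) * de2 (aa q)).
Proof.
  intros Hq. destruct q as [q1 q2]. simpl. pose proof (aa_in _ Hq) as Ha.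
  apply (is_derive_ext_loc (fun t => e2 (aa (t, q2)))).
  - apply (filter_imp (fun t => tri (t, q2))); [|apply (loc_tri1 (q1,q2) Hq)].
    intros t Ht. rewrite d2u_eq; auto.
  - exact (is_derive_comp e2 (fun t => aa (t, q2)) q1 _ _ (e2_der _ Ha) (aa_d1 _ Hq)).
Qed.

Lemma d22_der q : tri q ->
  is_derive (fun t => Defs.d2 u (fst q, t)) (snd q) ((/ Dn q) * de2 (aa q)).
Proof.
  intros Hq. destruct q as [q1 q2]. simpl. pose proof (aa_in _ Hq) as Ha.
  apply (is_derive_ext_loc (fun t => e2 (aa (q1, t)))).
  - apply (filter_imp (fun t => tri (q1, t))); [|apply (loc_tri2 (q1,q2) Hq)].
    intros t Ht. rewrite d2u_eq; auto.
  - exact (is_derive_comp e2 (fun t => aa (q1, t)) q2 _ _ (e2_der _ Ha) (aa_d2 _ Hq)).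
Qed.

Lemma caa p : tri p -> continuous aa p.
Proof. intros H. apply cont2_continuous, aa_cont2, H. Qed.

Lemma cphi (phi : R -> R) p : tri p -> (forall s, 0 < s < 1 -> continuous phi s) ->
  continuous (fun q => phi (aa q)) p.
Proof. intros H Hp. apply ccomp. apply caa, H. apply Hp, aa_in, H. Qed.

Lemma cfst (p : R * R) : continuous (fun q : R * R => fst q) p.
Proof. destruct p. apply continuous_fst. Qed.

Lemma cDn p : tri p -> continuous Dn p.
Proof.
  intros H. unfold Dn. apply cplus. apply cmul. apply (cphi (Derive om)); auto. apply dom_cont.
  apply cplus. apply cfst. apply caa, H. apply (cphi om); auto. apply om_cont.
Qed.

Lemma cont_u (p : R * R) : continuous u p.
Proof.
  apply cont2_continuous. intros eps He. exists (eps/2). split. lra. intros q H1 H2.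
  eapply Rle_lt_trans. apply u_lip_abs. unfold edist.
  apply Rle_lt_trans with (Rabs (fst q - fst p) + Rabs (snd q - snd p)); [|lra].
  rewrite <- (sqrt_Rsqr (Rabs (fst q - fst p) + Rabs (snd q - snd p))).
  apply sqrt_le_1_alt. unfold Rsqr. rewrite <- !Rsqr_pow2. rewrite (Rsqr_abs (fst q - fst p)), (Rsqr_abs (snd q - snd p)).
  unfold Rsqr. pose proof (Rabs_pos (fst q - fst p)). pose proof (Rabs_pos (snd q - snd p)). nra.
  pose proof (Rabs_pos (fst q - fst p)). pose proof (Rabs_pos (snd q - snd p)). lra.
Qed.

Lemma ext_cont (F G : R * R -> R) p : tri p -> (forall q, tri q -> F q = G q) -> continuous F p -> continuous G p.
Proof.
  intros Hp HE HF. apply (continuous_ext_loc G F p); auto.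
  apply (filter_imp tri); auto. apply loc_tri, Hp.
Qed.

Lemma u_C2 : C2_on tri u.
Proof.
  intros p Hp.
  assert (HDn : Dn p <> 0) by (pose proof (Dn_pos p Hp); lra).
  split. { split; eexists; [apply d1u_der|apply d2u_der]; auto. }
  split. { split; eexists; [apply d11_der|apply d21_der]; auto. }
  split. { split; eexists; [apply d12_der|apply d22_der]; auto. }
  split. { apply cont_u. }
  split. { apply (ext_cont (fun q => ig (aa q))); auto. intros q Hq. rewrite d1u_eq; auto.
           apply (cphi ig); auto. apply ig_cont. }
  split. { apply (ext_cont (fun q => e2 (aa q))); auto. intros q Hq. rewrite d2u_eq; auto.
           apply (cphi e2); auto. apply e2_cont. }
  split. { apply (ext_cont (fun q => (- om (aa q) / Dn q) * dig (aa q))); auto.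
           intros q Hq. unfold Defs.d1 at 1. symmetry. apply is_derive_unique, d11_der, Hq.
           apply cmul. apply cdiv; auto. apply copp, (cphi om); auto; apply om_cont. apply cDn, Hp.
           apply (cphi dig); auto. apply dig_cont. }
  split. { apply (ext_cont (fun q => (/ Dn q) * dig (aa q))); auto.
           intros q Hq. unfold Defs.d2 at 1. symmetry. apply is_derive_unique, d21_der, Hq.
           apply cmul. apply cinv; auto. apply cDn, Hp.
           apply (cphi dig); auto. apply dig_cont. }
  split. { apply (ext_cont (fun q => (- om (aa q) / Dn q) * de2 (aa q))); auto.
           intros q Hq. unfold Defs.d1 at 1. symmetry. apply is_derive_unique, d12_der, Hq.
           apply cmul. apply cdiv; auto. apply copp, (cphi om); auto; apply om_cont. apply cDn, Hp.
           apply (cphi de2); auto. apply de2_cont. }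
  { apply (ext_cont (fun q => (/ Dn q) * de2 (aa q))); auto.
    intros q Hq. unfold Defs.d2 at 1. symmetry. apply is_derive_unique, d22_der, Hq.
    apply cmul. apply cinv; auto. apply cDn, Hp.
    apply (cphi de2); auto. apply de2_cont. }
Qed.

Lemma main_sec : exists u : R * R -> R,
    lipschitz_on closed_tri u /\ C2_on tri u /\
    forall x y, tri x -> tri y ->
      Rabs (u x - u y) <= edist x y /\
      (Rabs (u x - u y) = edist x y <->
         exists a, 0 < a < 1 /\ on_l om a x /\ on_l om a y).
Proof.
  exists u. split; [|split].
  - exists 1. intros x y _ _. rewrite Rmult_1_l. apply u_lip_abs.
  - apply u_C2.
  - intros x y Hx Hy. split. apply u_lip_abs. apply eq_char; auto.
Qed.
End Main.

Theorem lemma3p2 (omega : R -> R)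
  (hrange : forall t, 0 <= t <= 1 -> 0 <= omega t <= 1 / 2)
  (hcont : forall t, 0 <= t <= 1 ->
     filterlim omega (within (fun s => 0 <= s <= 1) (locally t)) (locally (omega t)))
  (hsmooth : forall (n : nat) t, 0 < t < 1 -> ex_derive_n omega n t)
  (hpos : forall t, 0 < t < 1 -> 0 < Derive omega t)
  (h0 : omega 0 = 0) (h1 : omega 1 = 1 / 2) :
  exists u : R * R -> R,
    lipschitz_on closed_tri u /\ C2_on tri u /\
    forall x y, tri x -> tri y ->
      Rabs (u x - u y) <= edist x y /\
      (Rabs (u x - u y) = edist x y <->
         exists a, 0 < a < 1 /\ on_l omega a x /\ on_l omega a y).
Proof.
  eapply main_sec; eauto.
Qed.
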